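(* Every closed admissible conic class contains a minimal (with respect to inclusion) closed admissible conic class.
   Context: Standing setting: $(X,\|\cdot\|)$ is a separable infinite-dimensional Banach space and $d$ is a translation-invariant stable pseudometric on $X$ such that $\mathrm{Id}\colon(X,\|\cdot\|)\to(X,d)$ is a coarse equivalence, with $\omega_{\mathrm{Id}}(t)=\sup\{d(x,y):\|x-y\|\le t\}$. $\Delta$ is a countable $\|\cdot\|$-dense $\mathbb Q$-linear subspace; $\bar x(\lambda,y)=d(\lambda x,y)$; $\mathcal T$ is the pointwise closure of $\{\bar x:x\in\Delta\}$ in $\mathbb R^{\mathbb Q\times\Delta}$; defining sequences $(x_n)\subseteq\Delta$ satisfy $\bar x_n\to\sigma$. Dilation $\alpha\cdot\sigma=\lim_n\overline{\alpha x_n}$ ($\alpha\in\mathbb Q$); convolution $\sigma*\tau=\lim_n\lim_m\overline{x_n+y_m}$. Symmetric types: $\sigma=(-1)\cdot\sigma$; $\mathcal S$ their set. $\gamma=\inf_{t>0}\omega_{\mathrm{Id}}(t)$; $\sigma$ admissible if $\sigma(1,0)>\gamma$. A conic class is a nonempty $\mathcal C\subseteq\mathcal S$, $\mathcal C\ne\{\bar0\}$, closed under dilation by all $\lambda\in\mathbb Q$ and under convolution; admissible if it contains an admissible type; closed means closed in $\mathcal T$. *)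

(* Defs.v *)
From Stdlib Require Import Reals QArith Qreals List.
Open Scope R_scope.

Record NormedSpace := {
  car :> Type;
  vzero : car;
  vadd : car -> car -> car;
  vopp : car -> car;
  vscal : R -> car -> car;
  vnorm : car -> R;
  vadd_assoc : forall x y z, vadd x (vadd y z) = vadd (vadd x y) z;
  vadd_comm : forall x y, vadd x y = vadd y x;
  vadd_0 : forall x, vadd x vzero = x;
  vadd_opp : forall x, vadd x (vopp x) = vzero;
  vscal_1 : forall x, vscal 1 x = x;
  vscal_assoc : forall a b x, vscal a (vscal b x) = vscal (a * b) x;
  vscal_distr_l : forall a x y, vscal a (vadd x y) = vadd (vscal a x) (vscal a y);
  vscal_distr_r : forall a b x, vscal (a + b) x = vadd (vscal a x) (vscal b x);
  vnorm_eq0 : forall x, vnorm x = 0 -> x = vzero;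
  vnorm_scal : forall a x, vnorm (vscal a x) = Rabs a * vnorm x;
  vnorm_triangle : forall x y, vnorm (vadd x y) <= vnorm x + vnorm y
}.

Arguments vzero {_}.
Arguments vadd {_}.
Arguments vopp {_}.
Arguments vscal {_}.
Arguments vnorm {_}.

Definition vsub {V : NormedSpace} (x y : V) : V := vadd x (vopp y).

Definition complete (V : NormedSpace) : Prop :=
  forall u : nat -> V,
    (forall eps, 0 < eps -> exists N, forall n m, (N <= n)%nat -> (N <= m)%nat ->
        vnorm (vsub (u n) (u m)) < eps) ->
    exists l : V, forall eps, 0 < eps -> exists N, forall n, (N <= n)%nat ->
        vnorm (vsub (u n) l) < eps.

Definition separable (V : NormedSpace) : Prop :=
  exists e : nat -> V, forall (x : V) eps, 0 < eps -> exists n, vnorm (vsub x (e n)) < eps.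

Fixpoint lin_comb {V : NormedSpace} (cs : list R) (vs : list V) : V :=
  match cs, vs with
  | c :: cs', v :: vs' => vadd (vscal c v) (lin_comb cs' vs')
  | _, _ => vzero
  end.

Definition infinite_dimensional (V : NormedSpace) : Prop :=
  ~ exists vs : list V, forall x : V,
      exists cs : list R, length cs = length vs /\ x = lin_comb cs vs.

Definition separable_inf_dim_Banach (V : NormedSpace) : Prop :=
  complete V /\ separable V /\ infinite_dimensional V.

Section Setting.
Variable V : NormedSpace.

Definition pseudometric (d : V -> V -> R) : Prop :=
  (forall x, d x x = 0) /\ (forall x y, d x y = d y x) /\
  (forall x y z, d x z <= d x y + d y z).

Definition translation_invariant (d : V -> V -> R) : Prop :=
  forall x y z, d (vadd x z) (vadd y z) = d x y.

Definition iter_lim (F : nat -> nat -> R) (a : R) : Prop :=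
  exists f : nat -> R, (forall n, Un_cv (F n) (f n)) /\ Un_cv f a.

Definition stable (d : V -> V -> R) : Prop :=
  forall (u v : nat -> V),
    (exists M, forall n, d (u n) vzero <= M /\ d (v n) vzero <= M) ->
    forall a b,
      iter_lim (fun n m => d (u n) (v m)) a ->
      iter_lim (fun m n => d (u n) (v m)) b ->
      a = b.

Definition id_coarse_equivalence (d : V -> V -> R) : Prop :=
  (forall t, exists M, forall x y : V, vnorm (vsub x y) <= t -> d x y <= M) /\
  (forall M, exists t, forall x y : V, d x y <= M -> vnorm (vsub x y) <= t).

(* omega_Id(t) < a, where omega_Id(t) = sup { d x y : ||x - y|| <= t } *)
Definition omega_lt (d : V -> V -> R) (t a : R) : Prop :=
  exists c, c < a /\ forall x y : V, vnorm (vsub x y) <= t -> d x y <= c.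

(* gamma < a, where gamma = inf_{t > 0} omega_Id(t) *)
Definition gamma_lt (d : V -> V -> R) (a : R) : Prop :=
  exists t, 0 < t /\ omega_lt d t a.

Definition good_Delta (D : V -> Prop) : Prop :=
  (exists f : nat -> V, forall x, D x -> exists n, f n = x) /\
  (forall (x : V) eps, 0 < eps -> exists y, D y /\ vnorm (vsub x y) < eps) /\
  D vzero /\
  (forall x y, D x -> D y -> D (vadd x y)) /\
  (forall (q : Q) x, D x -> D (vscal (Q2R q) x)).

Variable d : V -> V -> R.
Variable D : V -> Prop.

Definition DeltaT : Type := { y : V | D y }.

Definition Tp : Type := Q -> DeltaT -> R.

Definition bar (x : V) : Tp := fun l y => d (vscal (Q2R l) x) (proj1_sig y).

Definition conv_pt (s : nat -> Tp) (sigma : Tp) : Prop :=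
  forall l y, Un_cv (fun n => s n l y) (sigma l y).

(* membership in the pointwise (product-topology) closure of a set A of Tp *)
Definition in_closure (A : Tp -> Prop) (sigma : Tp) : Prop :=
  forall (F : list (Q * DeltaT)) eps, 0 < eps ->
    exists tau, A tau /\
      forall p, In p F -> Rabs (tau (fst p) (snd p) - sigma (fst p) (snd p)) < eps.

Definition InT (sigma : Tp) : Prop :=
  in_closure (fun tau => exists x, D x /\ tau = bar x) sigma.

Definition defining_seq (xs : nat -> V) (sigma : Tp) : Prop :=
  (forall n, D (xs n)) /\ conv_pt (fun n => bar (xs n)) sigma.

Definition is_dilation (alpha : Q) (sigma rho : Tp) : Prop :=
  exists xs, defining_seq xs sigma /\
    conv_pt (fun n => bar (vscal (Q2R alpha) (xs n))) rho.

Definition is_convolution (sigma tau rho : Tp) : Prop :=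
  exists xs ys, defining_seq xs sigma /\ defining_seq ys tau /\
    forall l y, iter_lim (fun n m => bar (vadd (xs n) (ys m)) l y) (rho l y).

Definition symmetric_type (sigma : Tp) : Prop := is_dilation (-1)%Q sigma sigma.

Definition InS (sigma : Tp) : Prop := InT sigma /\ symmetric_type sigma.

Definition admissible_type (sigma : Tp) : Prop :=
  exists z : DeltaT, proj1_sig z = vzero /\ gamma_lt d (sigma 1%Q z).

Definition subclass (A B : Tp -> Prop) : Prop := forall sigma, A sigma -> B sigma.

Definition conic_class (C : Tp -> Prop) : Prop :=
  subclass C InS /\
  (exists sigma, C sigma) /\
  ~ (forall sigma, C sigma <-> sigma = bar vzero) /\
  (forall sigma (l : Q) rho, C sigma -> is_dilation l sigma rho -> C rho) /\
  (forall sigma tau rho, C sigma -> C tau -> is_convolution sigma tau rho -> C rho).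

Definition admissible_class (C : Tp -> Prop) : Prop :=
  exists sigma, C sigma /\ admissible_type sigma.

(* closed in T (T is itself closed in R^(Q x Delta)) *)
Definition closed_class (C : Tp -> Prop) : Prop :=
  forall sigma, InT sigma -> in_closure C sigma -> C sigma.

Definition closed_admissible_conic (C : Tp -> Prop) : Prop :=
  conic_class C /\ admissible_class C /\ closed_class C.

End Setting.

(* Main.v *)
Require Import Defs.
From Stdlib Require Import Reals ZArith QArith Qreals List Lra Lia Cantor Classical ClassicalEpsilon ProofIrrelevance.
Open Scope R_scope.

Lemma cv_ev_gt (u : nat -> R) a c : Un_cv u a -> c < a -> exists N, forall n, (N <= n)%nat -> c < u n.
Proof.
  intros H Hc. destruct (H (a - c)) as [N HN]; [lra|]. exists N. intros n Hn.
  specialize (HN n Hn). unfold R_dist in HN. apply Rabs_def2 in HN. lra.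
Qed.

Lemma cv_ev_lt (u : nat -> R) a c : Un_cv u a -> a < c -> exists N, forall n, (N <= n)%nat -> u n < c.
Proof.
  intros H Hc. destruct (H (c - a)) as [N HN]; [lra|]. exists N. intros n Hn.
  specialize (HN n Hn). unfold R_dist in HN. apply Rabs_def2 in HN. lra.
Qed.

Lemma cv_le_ev (u v : nat -> R) a b : Un_cv u a -> Un_cv v b ->
  (exists N, forall n, (N <= n)%nat -> u n <= v n) -> a <= b.
Proof.
  intros Hu Hv [N HN]. destruct (Rle_or_lt a b) as [|Hab]; [auto|exfalso].
  destruct (cv_ev_gt u a ((a+b)/2) Hu) as [N1 H1]; [lra|].
  destruct (cv_ev_lt v b ((a+b)/2) Hv) as [N2 H2]; [lra|].
  specialize (H1 (N+N1+N2)%nat ltac:(lia)). specialize (H2 (N+N1+N2)%nat ltac:(lia)).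
  specialize (HN (N+N1+N2)%nat ltac:(lia)). lra.
Qed.

Lemma cv_const c : Un_cv (fun _ => c) c.
Proof. intros e He. exists 0%nat. intros. unfold R_dist. rewrite Rminus_diag, Rabs_R0. lra. Qed.

Lemma cv_le_const (u : nat -> R) a c : Un_cv u a ->
  (exists N, forall n, (N <= n)%nat -> u n <= c) -> a <= c.
Proof. intros H1 H2. eapply cv_le_ev; [exact H1| apply cv_const | exact H2]. Qed.

Lemma cv_ge_const (u : nat -> R) a c : Un_cv u a ->
  (exists N, forall n, (N <= n)%nat -> c <= u n) -> c <= a.
Proof. intros H1 H2. eapply cv_le_ev; [apply cv_const| exact H1 | exact H2]. Qed.

Lemma cv_plus_const (v : nat -> R) b c : Un_cv v b -> Un_cv (fun n => v n + c) (b + c).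
Proof. intros H e He. destruct (H e He) as [N HN]. exists N. intros n Hn.
  unfold R_dist in *. replace (v n + c - (b + c)) with (v n - b) by ring. auto. Qed.

Lemma cv_sub (w v : nat -> R) l j : Un_cv w l ->
  (forall n, (j <= n)%nat -> exists m, (n <= m)%nat /\ v n = w m) -> Un_cv v l.
Proof.
  intros H Hv e He. destruct (H e He) as [N HN]. exists (N + j)%nat. intros n Hn.
  destruct (Hv n ltac:(lia)) as [m [Hm ->]]. apply HN. lia.
Qed.

Lemma inv_small e : 0 < e -> exists N : nat, forall n, (N <= n)%nat -> / (INR n + 1) < e.
Proof.
  intros He. destruct (archimed_cor1 e He) as [N [HN HN0]]. exists N. intros n Hn.
  apply Rle_lt_trans with (/ INR N); [|auto].
  apply Rinv_le_contravar. apply lt_0_INR; lia.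
  apply le_INR in Hn. lra.
Qed.

Fixpoint iter_pick (pick : nat -> nat -> nat) (k : nat) : nat :=
  match k with O => pick O O | S k' => pick (S (iter_pick pick k')) (S k') end.

Lemma BW_sub (u : nat -> R) K : (forall n, Rabs (u n) <= K) ->
  exists phi l, (forall n, (phi n < phi (S n))%nat) /\ Un_cv (fun n => u (phi n)) l.
Proof.
  intros HK.
  destruct (Bolzano_Weierstrass u (fun c => -K <= c <= K) (compact_P3 (-K) K)) as [l Hl].
  { intros n. specialize (HK n). revert HK. unfold Rabs. destruct (Rcase_abs (u n)); lra. }
  assert (Hp : forall N k, exists p, (N <= p)%nat /\ Rabs (u p - l) < / (INR k + 1)).
  { intros N k. assert (Hpos : 0 < / (INR k + 1)).
    { apply Rinv_0_lt_compat. pose proof (pos_INR k). lra. }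
    destruct (Hl (disc l (mkposreal _ Hpos)) N) as [p [Hp1 Hp2]].
    - exists (mkposreal _ Hpos). intros x Hx. exact Hx.
    - exists p. split; auto. }
  set (pick := fun N k => proj1_sig (constructive_indefinite_description _ (Hp N k))).
  assert (Hpick : forall N k, (N <= pick N k)%nat /\ Rabs (u (pick N k) - l) < / (INR k + 1)).
  { intros. unfold pick. destruct (constructive_indefinite_description _ _). simpl. auto. }
  exists (iter_pick pick), l. split.
  - intros n. simpl. destruct (Hpick (S (iter_pick pick n)) (S n)). lia.
  - intros e He. destruct (inv_small e He) as [N HN]. exists N. intros n Hn.
    unfold R_dist. apply Rlt_trans with (/ (INR n + 1)); auto.
    destruct n; simpl; apply Hpick.
Qed.

Definition bounded_seq (w : nat -> R) := exists K, forall n, Rabs (w n) <= K.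
Definition sincr (phi : nat -> nat) := forall n, (phi n < phi (S n))%nat.

Lemma sub_ex (w : nat -> R) : exists phi, sincr phi /\
  (bounded_seq w -> exists l, Un_cv (fun n => w (phi n)) l).
Proof.
  destruct (classic (bounded_seq w)) as [[K HK]|Hn].
  - destruct (BW_sub w K HK) as [phi [l [H1 H2]]]. exists phi. split; eauto.
  - exists (fun n => n). split. intros n; lia. tauto.
Qed.

Definition sub_of (w : nat -> R) : nat -> nat :=
  proj1_sig (constructive_indefinite_description _ (sub_ex w)).

Lemma sub_of_spec w : sincr (sub_of w) /\
  (bounded_seq w -> exists l, Un_cv (fun n => w (sub_of w n)) l).
Proof. unfold sub_of. destruct (constructive_indefinite_description _ _). simpl. auto. Qed.

Lemma sincr_ge phi : sincr phi -> forall n, (n <= phi n)%nat.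
Proof. intros H n. induction n. lia. specialize (H n). lia. Qed.

Lemma sincr_mono phi : sincr phi -> forall n m, (n <= m)%nat -> (phi n <= phi m)%nat.
Proof. intros H n m Hnm. induction Hnm. lia. specialize (H m). lia. Qed.

Section Diag.
Variable I : Type.
Variable e : nat -> I.
Variable u : nat -> I -> R.

Fixpoint Phi (j : nat) : nat -> nat :=
  match j with
  | O => fun n => n
  | S j' => fun n => Phi j' (sub_of (fun m => u (Phi j' m) (e j')) n)
  end.

Lemma Phi_sincr j : sincr (Phi j).
Proof.
  induction j; intros n; simpl. lia.
  destruct (sub_of_spec (fun m => u (Phi j m) (e j))) as [Hs _].
  specialize (Hs n).
  pose proof (sincr_mono _ IHj _ _ Hs) as Hm.
  specialize (IHj (sub_of (fun m : nat => u (Phi j m) (e j)) n)). lia.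
Qed.

Lemma Phi_factor j m : (j <= m)%nat -> exists g, (forall n, (n <= g n)%nat) /\ forall n, Phi m n = Phi j (g n).
Proof.
  intros H. induction H.
  - exists (fun n => n). split; intros; lia.
  - destruct IHle as [g [Hg1 Hg2]].
    exists (fun n => g (sub_of (fun k => u (Phi m k) (e m)) n)). split.
    + intros n. pose proof (sincr_ge _ (proj1 (sub_of_spec (fun k => u (Phi m k) (e m)))) n).
      specialize (Hg1 (sub_of (fun k => u (Phi m k) (e m)) n)). lia.
    + intros n. simpl. apply Hg2.
Qed.

Lemma diagonal : (forall i, exists K, forall k, Rabs (u k i) <= K) ->
  (forall i, exists n, e n = i) ->
  exists delta : nat -> nat, (forall n, (n <= delta n)%nat) /\
    forall i, exists l, Un_cv (fun n => u (delta n) i) l.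
Proof.
  intros HK He. exists (fun n => Phi n n). split.
  - intros n. apply sincr_ge, Phi_sincr.
  - intros i. destruct (He i) as [j <-].
    destruct (sub_of_spec (fun m => u (Phi j m) (e j))) as [_ Hc].
    destruct Hc as [l Hl].
    { destruct (HK (e j)) as [K HK']. exists K. intros n. apply HK'. }
    exists l. apply cv_sub with (w := fun n => u (Phi (S j) n) (e j)) (j := S j); [exact Hl|].
    intros n Hn. destruct (Phi_factor (S j) n Hn) as [g [Hg1 Hg2]].
    exists (g n). split; auto. rewrite Hg2. reflexivity.
Qed.
End Diag.

Definition countable (X : Type) := exists e : nat -> X, forall x, exists n, e n = x.

Lemma countable_prod X Y : countable X -> countable Y -> countable (X * Y).
Proof.
  intros [e1 H1] [e2 H2]. exists (fun n => let p := Cantor.of_nat n in (e1 (fst p), e2 (snd p))).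
  intros [x y]. destruct (H1 x) as [a <-]. destruct (H2 y) as [b <-].
  exists (Cantor.to_nat (a, b)). rewrite Cantor.cancel_of_to. reflexivity.
Qed.

Fixpoint dec_list {X} (e : nat -> X) (len c : nat) : list X :=
  match len with
  | O => nil
  | S l => e (fst (Cantor.of_nat c)) :: dec_list e l (snd (Cantor.of_nat c))
  end.

Lemma countable_list X : countable X -> countable (list X).
Proof.
  intros [e H]. exists (fun n => dec_list e (fst (Cantor.of_nat n)) (snd (Cantor.of_nat n))).
  assert (Hl : forall l : list X, exists c, dec_list e (length l) c = l).
  { induction l as [|x l IH]. exists O. reflexivity.
    destruct IH as [c Hc]. destruct (H x) as [a <-].
    exists (Cantor.to_nat (a, c)). cbn [dec_list length]. rewrite Cantor.cancel_of_to. cbn [fst snd]. rewrite Hc. reflexivity. }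
  intros l. destruct (Hl l) as [c Hc]. exists (Cantor.to_nat (length l, c)).
  rewrite Cantor.cancel_of_to. exact Hc.
Qed.

Lemma countable_Q : countable Q.
Proof.
  exists (fun n => let p := Cantor.of_nat n in let p2 := Cantor.of_nat (snd p) in
     Qmake (Z.of_nat (fst p2) - Z.of_nat (snd p2))%Z (Pos.of_succ_nat (fst p))).
  intros [z q].
  exists (Cantor.to_nat (pred (Pos.to_nat q), Cantor.to_nat (Z.to_nat z, Z.to_nat (- z)))).
  cbv beta zeta. rewrite Cantor.cancel_of_to. cbn [fst snd]. rewrite Cantor.cancel_of_to. cbn [fst snd]. f_equal.
  - lia.
  - apply SuccNat2Pos.inv. lia.
Qed.

Lemma countable_Delta (V : NormedSpace) (D : V -> Prop) : good_Delta V D -> countable (DeltaT V D).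
Proof.
  intros [[f Hf] [_ [H0 _]]].
  assert (Hc : forall n, exists y : DeltaT V D, D (f n) -> proj1_sig y = f n).
  { intros n. destruct (classic (D (f n))) as [Hd|Hd].
    - exists (exist _ (f n) Hd). auto.
    - exists (exist _ vzero H0). tauto. }
  exists (fun n => proj1_sig (constructive_indefinite_description _ (Hc n))).
  intros [y Hy]. destruct (Hf y Hy) as [n Hn]. exists n.
  destruct (constructive_indefinite_description _ _) as [[y' Hy'] Hq]. simpl in *.
  subst y. specialize (Hq Hy). simpl in Hq. subst y'. f_equal. apply proof_irrelevance.
Qed.

Section Vec.
Variable V : NormedSpace.

Lemma v0l (x : V) : vadd vzero x = x.
Proof. rewrite vadd_comm. apply vadd_0. Qed.

Lemma vscal0 (x : V) : vscal 0 x = vzero.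
Proof.
  assert (H : vscal 0 x = vadd (vscal 0 x) (vscal 0 x)).
  { rewrite <- vscal_distr_r. f_equal. ring. }
  transitivity (vadd (vadd (vscal 0 x) (vscal 0 x)) (vopp (vscal 0 x))).
  { rewrite <- vadd_assoc, vadd_opp, vadd_0. reflexivity. }
  rewrite <- H. apply vadd_opp.
Qed.

Lemma vscal_zero a : vscal a (@vzero V) = vzero.
Proof. rewrite <- (vscal0 vzero), vscal_assoc. rewrite Rmult_0_r. reflexivity. Qed.

Lemma vnorm_zero : vnorm (@vzero V) = 0.
Proof. rewrite <- (vscal0 vzero), vnorm_scal, Rabs_R0. ring. Qed.

Lemma vopp_uniq (x y : V) : vadd x y = vzero -> y = vopp x.
Proof.
  intros H. rewrite <- (vadd_0 _ y), <- (vadd_opp _ x), vadd_assoc, (vadd_comm _ y x), H. apply v0l.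
Qed.

Lemma vopp_scal (x : V) : vopp x = vscal (-1) x.
Proof.
  symmetry. apply vopp_uniq. rewrite <- (vscal_1 _ x) at 1. rewrite <- vscal_distr_r.
  replace (1 + -1) with 0 by ring. apply vscal0.
Qed.

Lemma vsub_scal a b (x : V) : vsub (vscal a x) (vscal b x) = vscal (a - b) x.
Proof.
  unfold vsub. rewrite vopp_scal, vscal_assoc, <- vscal_distr_r. f_equal. ring.
Qed.

Lemma vsub_0 (x : V) : vsub x vzero = x.
Proof. unfold vsub. rewrite vopp_scal, vscal_zero. apply vadd_0. Qed.

Lemma vsub_xx (x : V) : vsub x x = vzero.
Proof. apply vadd_opp. Qed.

Lemma vnorm_nonneg (x : V) : 0 <= vnorm x.
Proof.
  pose proof (vnorm_triangle _ x (vopp x)). rewrite vadd_opp, vnorm_zero in H.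
  rewrite vopp_scal, vnorm_scal in H. replace (Rabs (-1)) with 1 in H by (unfold Rabs; destruct Rcase_abs; lra). lra.
Qed.
End Vec.

Lemma Q2R_one : Q2R 1 = 1.
Proof. unfold Q2R. simpl. field. Qed.

Lemma Q2R_zero : Q2R 0 = 0.
Proof. unfold Q2R. simpl. field. Qed.

Lemma Delta_eq (V : NormedSpace) (D : V -> Prop) (a b : DeltaT V D) : proj1_sig a = proj1_sig b -> a = b.
Proof. destruct a as [a Ha], b as [b Hb]. simpl. intros <-. f_equal. apply proof_irrelevance. Qed.

Lemma nat_above r : exists N : nat, r < INR N.
Proof.
  destruct (archimed r) as [H1 _]. destruct (Z.lt_ge_cases (up r) 0) as [Hn|Hp].
  - exists O. simpl. apply IZR_lt in Hn. lra.
  - exists (Z.to_nat (up r)). rewrite INR_IZR_INZ, Z2Nat.id by lia. lra.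
Qed.

Lemma Un_cv_ext (u v : nat -> R) l : (forall n, u n = v n) -> Un_cv u l -> Un_cv v l.
Proof. intros H Hu e He. destruct (Hu e He) as [N HN]. exists N. intros n Hn. rewrite <- H. auto. Qed.

Lemma discrete_ivt (s : nat -> R) A M1 J : s O < A -> A <= s J ->
  (forall j, s (S j) <= s j + M1) -> exists j, A <= s j <= A + M1.
Proof.
  intros H0 HJ Hs. induction J as [|J IH]. lra.
  destruct (Rle_or_lt A (s J)) as [H|H]. auto.
  exists (S J). specialize (Hs J). lra.
Qed.

Lemma Q2R_beta (j N : nat) : Q2R (Qmake (Z.of_nat j) (Pos.of_succ_nat N)) = INR j / (INR N + 1).
Proof.
  unfold Q2R. simpl. rewrite <- INR_IZR_INZ.
  replace (IZR (Zpos (Pos.of_succ_nat N))) with (INR N + 1). reflexivity.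
  rewrite <- S_INR, INR_IZR_INZ. f_equal.
Qed.

Lemma div_nonneg j N : 0 <= INR j / (INR N + 1).
Proof. unfold Rdiv. apply Rmult_le_pos. apply pos_INR. left. apply Rinv_0_lt_compat. pose proof (pos_INR N). lra. Qed.

Section Main.
Variable V : NormedSpace.
Variable d : V -> V -> R.
Variable D : V -> Prop.
Hypothesis Hpm : pseudometric V d.
Hypothesis Hce : id_coarse_equivalence V d.
Hypothesis HD : good_Delta V D.

Lemma d_sym x y : d x y = d y x.
Proof. apply Hpm. Qed.
Lemma d_tri x y z : d x z <= d x y + d y z.
Proof. apply Hpm. Qed.
Lemma d_xx x : d x x = 0.
Proof. apply Hpm. Qed.
Lemma d_nonneg x y : 0 <= d x y.
Proof. pose proof (d_tri x y x). rewrite d_xx, (d_sym y x) in H. lra. Qed.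

Lemma gamma_pos a : gamma_lt V d a -> 0 < a.
Proof.
  intros [t [Ht [c [Hc Hw]]]]. specialize (Hw vzero vzero).
  rewrite vsub_xx, vnorm_zero, d_xx in Hw. specialize (Hw ltac:(lra)). lra.
Qed.

Lemma bar_dil (xs : nat -> V) (sigma : Tp V D) (b : Q) :
  conv_pt V D (fun n => bar V d D (xs n)) sigma ->
  conv_pt V D (fun n => bar V d D (vscal (Q2R b) (xs n))) (fun l y => sigma (l * b)%Q y).
Proof.
  intros H l y. apply Un_cv_ext with (u := fun n => bar V d D (xs n) (l * b)%Q y); [|apply H].
  intros n. unfold bar. rewrite vscal_assoc, Q2R_mult. reflexivity.
Qed.

Lemma sig_val (xs : nat -> V) (sigma : Tp V D) z q :
  proj1_sig z = vzero -> conv_pt V D (fun n => bar V d D (xs n)) sigma ->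
  Un_cv (fun n => d (vscal (Q2R q) (xs n)) vzero) (sigma q z).
Proof.
  intros Hz H. apply Un_cv_ext with (u := fun n => bar V d D (xs n) q z); [|apply H].
  intros n. unfold bar. rewrite Hz. reflexivity.
Qed.

Lemma sig_eq (xs : nat -> V) (sigma : Tp V D) z q q' :
  proj1_sig z = vzero -> conv_pt V D (fun n => bar V d D (xs n)) sigma ->
  Q2R q = Q2R q' -> sigma q z = sigma q' z.
Proof.
  intros Hz H Hq. eapply UL_sequence. apply (sig_val xs sigma z q Hz H).
  rewrite Hq. apply (sig_val xs sigma z q' Hz H).
Qed.

Lemma not_bar0 (sigma : Tp V D) : admissible_type V d D sigma -> sigma <> bar V d D vzero.
Proof.
  intros [z [Hz Hg]] ->. apply gamma_pos in Hg. unfold bar in Hg.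
  rewrite vscal_zero, Hz, d_xx in Hg. lra.
Qed.

Lemma normalize (sigma : Tp V D) xs z0 A M1 :
  proj1_sig z0 = vzero -> defining_seq V d D xs sigma -> admissible_type V d D sigma ->
  0 < A -> (forall x y : V, vnorm (vsub x y) <= 1 -> d x y <= M1) ->
  exists b : Q, A <= sigma (1 * b)%Q z0 <= A + M1.
Proof.
  intros Hz0 [HxD Hxs] [z [Hz [t [Ht [c [Hc Hw]]]]]] HA HM1.
  assert (z = z0) by (apply Delta_eq; congruence). subst z.
  set (s1 := sigma 1%Q z0) in *.
  assert (Hcv1 : Un_cv (fun n => d (xs n) vzero) s1).
  { apply Un_cv_ext with (u := fun n => d (vscal (Q2R 1) (xs n)) vzero).
    intros n. rewrite Q2R_one, vscal_1. reflexivity. apply sig_val; auto. }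
  destruct (cv_ev_gt _ _ c Hcv1 Hc) as [N1 HN1].
  destruct (cv_ev_lt _ _ (s1 + 1) Hcv1 ltac:(lra)) as [N2 HN2].
  destruct Hce as [H1 H2].
  destruct (H2 (s1 + 1)) as [T1 HT1].
  destruct (H2 A) as [tA HtA].
  assert (Hlow : forall n, (N1 <= n)%nat -> t < vnorm (xs n)).
  { intros n Hn. destruct (Rle_or_lt (vnorm (xs n)) t) as [Hle|]; auto.
    rewrite <- (vsub_0 _ (xs n)) in Hle. specialize (Hw _ _ Hle). specialize (HN1 n Hn). lra. }
  assert (Hup : forall n, (N2 <= n)%nat -> vnorm (xs n) <= T1).
  { intros n Hn. rewrite <- (vsub_0 _ (xs n)). apply HT1. specialize (HN2 n Hn). lra. }
  destruct (nat_above T1) as [N HN].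
  assert (HNpos : 0 < INR N + 1) by (pose proof (pos_INR N); lra).
  destruct (nat_above (tA * (INR N + 1) / t)) as [J HJ].
  set (beta := fun j : nat => Qmake (Z.of_nat j) (Pos.of_succ_nat N)).
  set (s := fun j => sigma (beta j) z0).
  assert (Hs : forall j, Un_cv (fun n => d (vscal (INR j / (INR N + 1)) (xs n)) vzero) (s j)).
  { intros j. unfold s. rewrite <- Q2R_beta. apply sig_val; auto. }
  destruct (discrete_ivt s A M1 J) as [j Hj].
  - replace (s O) with 0. lra. eapply UL_sequence; [|apply Hs].
    apply Un_cv_ext with (u := fun _ => 0); [|apply cv_const].
    intros n. simpl. unfold Rdiv. rewrite Rmult_0_l, vscal0, d_xx. reflexivity.
  - apply cv_ge_const with (u := fun n => d (vscal (INR J / (INR N + 1)) (xs n)) vzero); [apply Hs|].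
    exists N1. intros n Hn. left.
    destruct (Rle_or_lt (d (vscal (INR J / (INR N + 1)) (xs n)) vzero) A) as [Hle|]; auto.
    exfalso. specialize (HtA _ _ Hle). rewrite vsub_0, vnorm_scal in HtA.
    specialize (Hlow n Hn).
    assert (HJ' : tA < INR J / (INR N + 1) * t).
    { apply Rmult_lt_compat_r with (r := t / (INR N + 1)) in HJ.
      2: { apply Rdiv_lt_0_compat; lra. }
      replace (tA * (INR N + 1) / t * (t / (INR N + 1))) with tA in HJ by (field; lra).
      replace (INR J * (t / (INR N + 1))) with (INR J / (INR N + 1) * t) in HJ by (field; lra). exact HJ. }
    rewrite Rabs_right in HtA. 2: { apply Rle_ge, div_nonneg. }
    assert (0 <= INR J / (INR N + 1)) by (apply div_nonneg).
    assert (INR J / (INR N + 1) * t <= INR J / (INR N + 1) * vnorm (xs n)) by (apply Rmult_le_compat_l; lra).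
    lra.
  - intros j. apply cv_le_ev with (u := fun n => d (vscal (INR (S j) / (INR N + 1)) (xs n)) vzero)
       (v := fun n => d (vscal (INR j / (INR N + 1)) (xs n)) vzero + M1).
    apply Hs. apply cv_plus_const, Hs.
    exists N2. intros n Hn.
    pose proof (d_tri (vscal (INR (S j) / (INR N + 1)) (xs n)) (vscal (INR j / (INR N + 1)) (xs n)) vzero) as Htr.
    enough (d (vscal (INR (S j) / (INR N + 1)) (xs n)) (vscal (INR j / (INR N + 1)) (xs n)) <= M1) by lra.
    apply HM1.
    rewrite vsub_scal, vnorm_scal.
    replace (INR (S j) / (INR N + 1) - INR j / (INR N + 1)) with (/ (INR N + 1)) by (rewrite S_INR; field; lra).
    rewrite Rabs_right by (apply Rle_ge; left; apply Rinv_0_lt_compat; lra).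
    specialize (Hup n Hn). apply Rmult_le_reg_l with (INR N + 1); auto.
    rewrite <- Rmult_assoc, Rinv_r by lra. lra.
  - exists (beta j). replace (sigma (1 * beta j)%Q z0) with (s j); auto.
    unfold s. apply (sig_eq xs sigma z0); auto. rewrite Q2R_mult, Q2R_one. ring.
Qed.

Lemma type_bound z0 B l y : proj1_sig z0 = vzero -> exists K, forall (rho : Tp V D) ws,
  defining_seq V d D ws rho -> rho 1%Q z0 <= B -> Rabs (rho l y) <= K.
Proof.
  intros Hz. destruct Hce as [H1 H2].
  destruct (H2 (B + 1)) as [TB HTB].
  destruct (H1 (Rabs (Q2R l) * TB)) as [Ml HMl].
  exists (Ml + d vzero (proj1_sig y)). intros rho ws [HwD Hws] HB.
  assert (Hcv1 : Un_cv (fun n => d (ws n) vzero) (rho 1%Q z0)).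
  { apply Un_cv_ext with (u := fun n => d (vscal (Q2R 1) (ws n)) vzero).
    intros n. rewrite Q2R_one, vscal_1. reflexivity. apply sig_val; auto. }
  destruct (cv_ev_lt _ _ (B + 1) Hcv1 ltac:(lra)) as [N HN].
  assert (Hge : 0 <= rho l y).
  { apply cv_ge_const with (u := fun n => bar V d D (ws n) l y). apply Hws.
    exists O. intros. apply d_nonneg. }
  rewrite Rabs_right by lra.
  apply cv_le_const with (u := fun n => bar V d D (ws n) l y). apply Hws.
  exists N. intros n Hn. unfold bar.
  pose proof (d_tri (vscal (Q2R l) (ws n)) vzero (proj1_sig y)).
  enough (d (vscal (Q2R l) (ws n)) vzero <= Ml) by lra.
  apply HMl. rewrite vsub_0, vnorm_scal. apply Rmult_le_compat_l. apply Rabs_pos.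
  rewrite <- (vsub_0 _ (ws n)). apply HTB. specialize (HN n Hn). lra.
Qed.

Lemma closure_mono (A B : Tp V D -> Prop) sigma :
  (forall tau, A tau -> B tau) -> in_closure V D A sigma -> in_closure V D B sigma.
Proof.
  intros HAB H F eps He. destruct (H F eps He) as [tau [HA Ht]]. exists tau. auto.
Qed.

Lemma closure_idem (A : Tp V D -> Prop) sigma :
  in_closure V D (in_closure V D A) sigma -> in_closure V D A sigma.
Proof.
  intros H F eps He. destruct (H F (eps/2) ltac:(lra)) as [tau [Htau H1]].
  destruct (Htau F (eps/2) ltac:(lra)) as [tau' [Htau' H2]].
  exists tau'. split; auto. intros p Hp. specialize (H1 p Hp). specialize (H2 p Hp).
  pose proof (Rabs_triang (tau' (fst p) (snd p) - tau (fst p) (snd p)) (tau (fst p) (snd p) - sigma (fst p) (snd p))) as Htr.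
  replace (tau' (fst p) (snd p) - tau (fst p) (snd p) + (tau (fst p) (snd p) - sigma (fst p) (snd p)))
    with (tau' (fst p) (snd p) - sigma (fst p) (snd p)) in Htr by ring. lra.
Qed.

Lemma list_cv (u : nat -> Tp V D) rho :
  (forall l y, Un_cv (fun n => u n l y) (rho l y)) ->
  forall F eps, 0 < eps -> exists N, forall n, (N <= n)%nat -> forall p, In p F ->
    Rabs (u n (fst p) (snd p) - rho (fst p) (snd p)) < eps.
Proof.
  intros Hcv F eps He. induction F as [|p F IH].
  - exists O. intros n _ p [].
  - destruct IH as [N HN]. destruct (Hcv (fst p) (snd p) eps He) as [N' HN'].
    exists (N + N')%nat. intros n Hn q [<-|Hq].
    + apply HN'. lia.
    + apply HN; auto. lia.
Qed.

Lemma limit_in_closure (A : Tp V D -> Prop) (u : nat -> Tp V D) rho m :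
  (forall l y, Un_cv (fun n => u n l y) (rho l y)) ->
  (forall n, (m <= n)%nat -> A (u n)) -> in_closure V D A rho.
Proof.
  intros Hcv HA F eps He. destruct (list_cv u rho Hcv F eps He) as [N HN].
  exists (u (N + m)%nat). split. apply HA; lia. apply HN. lia.
Qed.

Definition cac := closed_admissible_conic V d D.

Lemma chain_mono (Cs : nat -> Tp V D -> Prop) :
  (forall k sigma, Cs (S k) sigma -> Cs k sigma) ->
  forall k m sigma, (k <= m)%nat -> Cs m sigma -> Cs k sigma.
Proof. intros H k m sigma Hkm. induction Hkm; auto. Qed.

Lemma chain_cac (Cs : nat -> Tp V D -> Prop) :
  (forall k, cac (Cs k)) -> (forall k sigma, Cs (S k) sigma -> Cs k sigma) ->
  cac (fun sigma => forall k, Cs k sigma).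
Proof.
  intros Hc Hdec.
  assert (Key : exists rho, (forall k, Cs k rho) /\ admissible_type V d D rho).
  { destruct (Hc O) as [_ [[s0 [Hs0 [z [Hz [ts [Hts [cs [Hcs Hws]]]]]]]] _]].
    set (A := s0 1%Q z) in *.
    assert (HA : 0 < A) by (apply gamma_pos; exists ts; split; auto; exists cs; auto).
    destruct Hce as [H1 H2]. destruct (H1 1) as [M1 HM1].
    assert (Hk : forall k, exists rho, Cs k rho /\ (exists ws, defining_seq V d D ws rho) /\
                 A <= rho 1%Q z <= A + M1).
    { intros k. destruct (Hc k) as [[HS [_ [_ [Hdil _]]]] [[sk [Hsk Hadm]] _]].
      destruct (HS sk Hsk) as [_ [xs [Hxs _]]].
      destruct (normalize sk xs z A M1 Hz Hxs Hadm HA HM1) as [b Hb].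
      exists (fun l y => sk (l * b)%Q y). split; [|split].
      - apply (Hdil sk b); auto. exists xs. split; auto. apply bar_dil, Hxs.
      - exists (fun n => vscal (Q2R b) (xs n)). split.
        + intros n. apply HD. apply Hxs.
        + apply bar_dil, Hxs.
      - exact Hb. }
    set (rf := fun k => proj1_sig (constructive_indefinite_description _ (Hk k))).
    assert (Hrf : forall k, Cs k (rf k) /\ (exists ws, defining_seq V d D ws (rf k)) /\
                 A <= rf k 1%Q z <= A + M1).
    { intros k. unfold rf. destruct (constructive_indefinite_description _ _). auto. }
    destruct (countable_prod _ _ countable_Q (countable_Delta V D HD)) as [e He].
    destruct (diagonal (Q * DeltaT V D) e (fun k p => rf k (fst p) (snd p))) as [delta [Hdelta Hlim]].
    { intros [l y]. destruct (type_bound z (A + M1) l y Hz) as [K HK]. exists K. intros k.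
      destruct (Hrf k) as [_ [[ws Hws2] Hb]]. simpl. apply (HK _ ws Hws2). lra. }
    { exact He. }
    set (rinf := fun l y => proj1_sig (constructive_indefinite_description _ (Hlim (l, y)))).
    assert (Hrinf : forall l y, Un_cv (fun n => rf (delta n) l y) (rinf l y)).
    { intros l y. unfold rinf. destruct (constructive_indefinite_description _ _). simpl in *. auto. }
    assert (HT : InT V d D rinf).
    { apply closure_idem. apply (limit_in_closure _ (fun n => rf (delta n)) rinf O Hrinf).
      intros n _. destruct (Hc (delta n)) as [[HS _] _]. apply HS, Hrf. }
    exists rinf. split.
    - intros m. destruct (Hc m) as [_ [_ Hcl]]. apply Hcl; auto.
      apply (limit_in_closure _ (fun n => rf (delta n)) rinf m Hrinf).
      intros n Hn. apply (chain_mono Cs Hdec m (delta n)). specialize (Hdelta n). lia. apply Hrf.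
    - exists z. split; auto. exists ts. split; auto. exists cs. split; auto.
      apply Rlt_le_trans with A; auto.
      apply cv_ge_const with (u := fun n => rf (delta n) 1%Q z). apply Hrinf.
      exists O. intros n _. apply Hrf. }
  destruct Key as [rho [Hrho Hadm]].
  destruct (Hc O) as [[HS0 _] _].
  split; [split; [|split; [|split; [|split]]]|split].
  - intros sigma Hs. apply HS0, Hs.
  - exists rho. exact Hrho.
  - intros Hiff. apply (not_bar0 rho Hadm). apply Hiff. exact Hrho.
  - intros sigma l r Hs Hd k. destruct (Hc k) as [[_ [_ [_ [Hdil _]]]] _]. apply (Hdil sigma l r); auto.
  - intros sigma tau r Hs Ht Hcv k. destruct (Hc k) as [[_ [_ [_ [_ Hconv]]]] _]. apply (Hconv sigma tau r); auto.
  - exists rho. auto.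
  - intros sigma HT Hcl k. destruct (Hc k) as [_ [_ Hclk]]. apply Hclk; auto.
    apply (closure_mono (fun s => forall k, Cs k s) (Cs k) sigma); [|exact Hcl]. intros tau Ht. apply Ht.
Qed.

Lemma IZR_succ N : IZR (Zpos (Pos.of_succ_nat N)) = INR N + 1.
Proof. rewrite <- S_INR, INR_IZR_INZ. f_equal. Qed.

Lemma Q_approx x eta : 0 < eta -> exists q, Rabs (Q2R q - x) < eta.
Proof.
  intros He. destruct (inv_small eta He) as [N HN]. specialize (HN N (le_n _)).
  assert (HNp : 0 < INR N + 1) by (pose proof (pos_INR N); lra).
  exists (Qmake (up (x * (INR N + 1))) (Pos.of_succ_nat N)).
  unfold Q2R. simpl. rewrite IZR_succ.
  destruct (archimed (x * (INR N + 1))) as [H1 H2].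
  assert (Hb : 0 < IZR (up (x * (INR N + 1))) * / (INR N + 1) - x <= / (INR N + 1)).
  { split.
    - apply Rmult_lt_reg_r with (INR N + 1); auto. rewrite Rmult_minus_distr_r, Rmult_assoc, Rinv_l by lra. lra.
    - apply Rmult_le_reg_r with (INR N + 1); auto. rewrite Rmult_minus_distr_r, Rmult_assoc, Rinv_l by lra. lra. }
  rewrite Rabs_right by lra. lra.
Qed.

Definition code := (list ((Q * DeltaT V D) * Q) * Q)%type.

Definition Uc (c : code) (tau : Tp V D) : Prop :=
  forall pr, In pr (fst c) -> Rabs (tau (fst (fst pr)) (snd (fst pr)) - Q2R (snd pr)) < Q2R (snd c).

Lemma step_ex (Ck : Tp V D -> Prop) (c : code) : exists E' : Tp V D -> Prop,
  subclass V D E' Ck /\ (cac Ck -> cac E') /\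
  ((exists E, cac E /\ subclass V D E Ck /\ forall tau, E tau -> ~ Uc c tau) ->
    forall tau, E' tau -> ~ Uc c tau).
Proof.
  destruct (classic (exists E, cac E /\ subclass V D E Ck /\ forall tau, E tau -> ~ Uc c tau)) as [[E [H1 [H2 H3]]]|Hn].
  - exists E. auto.
  - exists Ck. split. intros s Hs; auto. split; auto.
Qed.

Definition step (Ck : Tp V D -> Prop) (c : code) : Tp V D -> Prop :=
  proj1_sig (constructive_indefinite_description _ (step_ex Ck c)).

Lemma step_spec Ck c :
  subclass V D (step Ck c) Ck /\ (cac Ck -> cac (step Ck c)) /\
  ((exists E, cac E /\ subclass V D E Ck /\ forall tau, E tau -> ~ Uc c tau) ->
    forall tau, step Ck c tau -> ~ Uc c tau).
Proof. unfold step. destruct (constructive_indefinite_description _ _). auto. Qed.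

Fixpoint chain (C : Tp V D -> Prop) (ec : nat -> code) (k : nat) : Tp V D -> Prop :=
  match k with
  | O => C
  | S k' => step (chain C ec k') (ec k')
  end.

Lemma approx_list (sigma : Tp V D) eta F : 0 < eta -> exists L : list ((Q * DeltaT V D) * Q),
  map fst L = F /\ forall pr, In pr L -> Rabs (Q2R (snd pr) - sigma (fst (fst pr)) (snd (fst pr))) < eta.
Proof.
  intros He. induction F as [|p F IH].
  - exists nil. split; auto. intros pr [].
  - destruct IH as [L [HL1 HL2]]. destruct (Q_approx (sigma (fst p) (snd p)) eta He) as [q Hq].
    exists ((p, q) :: L). split. simpl. congruence.
    intros pr [<-|Hpr]; auto.
Qed.

Theorem minimal_exists (C : Tp V D -> Prop) : cac C ->
  exists M : Tp V D -> Prop, subclass V D M C /\ cac M /\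
    (forall E, cac E -> subclass V D E M -> forall sigma, E sigma <-> M sigma).
Proof.
  intros HC.
  destruct (countable_prod _ _ (countable_list _ (countable_prod _ _ (countable_prod _ _ countable_Q (countable_Delta V D HD)) countable_Q)) countable_Q) as [ec Hec].
  assert (Hcac : forall k, cac (chain C ec k)).
  { induction k. exact HC. simpl. apply step_spec. exact IHk. }
  assert (Hdec : forall k sigma, chain C ec (S k) sigma -> chain C ec k sigma).
  { intros k sigma. simpl. apply step_spec. }
  exists (fun sigma => forall k, chain C ec k sigma). split; [|split].
  - intros sigma H. exact (H O).
  - apply chain_cac; auto.
  - intros E HE HEM sigma. split. apply HEM.
    intros HM. apply NNPP. intros HnE.
    assert (HT : InT V d D sigma).
    { destruct HC as [[HS _] _]. apply (HS sigma (HM O)). }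
    assert (Hncl : ~ in_closure V D E sigma).
    { intros Hcl. apply HnE. destruct HE as [_ [_ Hcl']]. apply Hcl'; auto. }
    unfold in_closure in Hncl.
    apply not_all_ex_not in Hncl. destruct Hncl as [F Hncl].
    apply not_all_ex_not in Hncl. destruct Hncl as [eps Hncl].
    apply imply_to_and in Hncl. destruct Hncl as [Heps Hncl].
    destruct (inv_small (eps / 2) ltac:(lra)) as [n Hn]. specialize (Hn n (le_n _)).
    set (etaQ := Qmake (Z.of_nat 1) (Pos.of_succ_nat n)).
    assert (Heta : Q2R etaQ = / (INR n + 1)).
    { unfold etaQ. rewrite Q2R_beta. simpl. field. pose proof (pos_INR n). lra. }
    assert (Hetap : 0 < Q2R etaQ).
    { rewrite Heta. apply Rinv_0_lt_compat. pose proof (pos_INR n). lra. }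
    destruct (approx_list sigma (Q2R etaQ) F Hetap) as [L [HL1 HL2]].
    destruct (Hec (L, etaQ)) as [k Hk].
    assert (HU : Uc (L, etaQ) sigma).
    { intros pr Hpr. simpl. specialize (HL2 pr Hpr). rewrite Rabs_minus_sym. exact HL2. }
    assert (HEU : forall tau, E tau -> ~ Uc (L, etaQ) tau).
    { intros tau Htau HUt. apply Hncl. exists tau. split; auto.
      intros p Hp. rewrite <- HL1 in Hp. apply in_map_iff in Hp. destruct Hp as [pr [<- Hpr]].
      specialize (HUt pr Hpr). specialize (HL2 pr Hpr). simpl in HUt.
      pose proof (Rabs_triang (tau (fst (fst pr)) (snd (fst pr)) - Q2R (snd pr))
                              (Q2R (snd pr) - sigma (fst (fst pr)) (snd (fst pr)))) as Htr.
      replace (tau (fst (fst pr)) (snd (fst pr)) - Q2R (snd pr) + (Q2R (snd pr) - sigma (fst (fst pr)) (snd (fst pr))))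
        with (tau (fst (fst pr)) (snd (fst pr)) - sigma (fst (fst pr)) (snd (fst pr))) in Htr by ring.
      lra. }
    destruct (step_spec (chain C ec k) (ec k)) as [_ [_ Hdis]].
    apply (Hdis) with (tau := sigma).
    + exists E. split; auto. split.
      * intros tau Ht. apply (HEM tau Ht).
      * rewrite Hk. exact HEU.
    + exact (HM (S k)).
    + rewrite Hk. exact HU.
Qed.
End Main.

Theorem proposition5p3 :
  forall (V : NormedSpace) (d : V -> V -> R) (D : V -> Prop),
    separable_inf_dim_Banach V ->
    pseudometric V d ->
    translation_invariant V d ->
    stable V d ->
    id_coarse_equivalence V d ->
    good_Delta V D ->
    forall C : Tp V D -> Prop,
      closed_admissible_conic V d D C ->
      exists M : Tp V D -> Prop,
        subclass V D M C /\
        closed_admissible_conic V d D M /\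
        (forall E : Tp V D -> Prop,
            closed_admissible_conic V d D E -> subclass V D E M ->
            forall sigma, E sigma <-> M sigma).
Proof.
  intros V d D _ Hpm _ _ Hce HD C HC.
  exact (minimal_exists V d D Hpm Hce HD C HC).
Qed.
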